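(* Let $L$ be a complex Leibniz algebra, let $I$ be the ideal generated by all squares $[x,x]$, $x\in L$, and suppose $L/I\cong\mathfrak{e}(2)$ and $I$, as a right $\mathfrak{e}(2)$-module via $(i,x+I)\mapsto[i,x]$, is isomorphic to the three-dimensional module with basis $X_1,X_2,X_3$ and action $(X_1,p_-)=-X_3$, $(X_2,p_+)=X_3$, $(X_1,l)=-X_1$, $(X_2,l)=X_2$ (all other products zero). Then there exist $\alpha_1,\alpha_2\in\mathbb C$ and a basis $\{l,p_+,p_-,X_1,X_2,X_3\}$ of $L$ (with $X_i\in I$) in which the only nonzero products are $[l,p_+]=p_+$, $[p_+,l]=-p_+$, $[l,p_-]=-p_-$, $[p_-,l]=p_-$, $[l,l]=\alpha_1X_3$, $[p_+,p_-]=\alpha_2X_3$, $[p_-,p_+]=-\alpha_2X_3$, $[X_1,p_-]=-X_3$, $[X_1,l]=-X_1$, $[X_2,p_+]=X_3$, $[X_2,l]=X_2$. (The algebra with this table is denoted $K_2(\alpha_1,\alpha_2)$.)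
   Context: A (right) Leibniz algebra is a vector space $L$ with a bilinear bracket satisfying $[[x,y],z]=[[x,z],y]+[x,[y,z]]$. The ideal $I$ generated by squares satisfies $[L,I]=0$, so $L/I$ is a Lie algebra and $I$ is a right $L/I$-module via $(i,x+I)\mapsto[i,x]$. $\mathfrak{e}(2)$ is the complex Lie algebra with basis $\{l,p_+,p_-\}$ and brackets $[l,p_+]=p_+$, $[l,p_-]=-p_-$, $[p_+,p_-]=0$. *)

(* Defs.v *)
From mathcomp Require Import all_boot all_algebra all_field.
From mathcomp Require Import complex.
From mathcomp Require Import reals Rstruct.

Set Implicit Arguments.
Unset Strict Implicit.
Unset Printing Implicit Defensive.
Import GRing.Theory.
Local Open Scope ring_scope.

Definition CC : fieldType := (Rdefinitions.R)[i].

Section Leibniz.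
Variable L : lmodType CC.
Variable br : L -> L -> L.

Definition bilinear_br : Prop :=
  (forall (a : CC) x y z, br (a *: x + y) z = a *: br x z + br y z) /\
  (forall (a : CC) x y z, br x (a *: y + z) = a *: br x y + br x z).

Definition right_leibniz : Prop :=
  forall x y z, br (br x y) z = br (br x z) y + br x (br y z).

Definition is_leibniz_algebra : Prop := bilinear_br /\ right_leibniz.

Definition is_ideal (J : L -> Prop) : Prop :=
  [/\ J 0, (forall (a : CC) x y, J x -> J y -> J (a *: x + y)),
      (forall x y, J x -> J (br x y)) & (forall x y, J x -> J (br y x))].

Definition squares_ideal (v : L) : Prop :=
  forall J : L -> Prop, is_ideal J -> (forall x, J (br x x)) -> J v.
End Leibniz.

(* The Lie algebra e(2), realized on 'rV[CC]_3 with coordinates in the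
   basis (l, p_+, p_-) = (0, 1, 2). *)
Definition e2_l : 'rV[CC]_3 := \row_j (if j == 0 :> nat then 1 else 0).
Definition e2_pp : 'rV[CC]_3 := \row_j (if j == 1 :> nat then 1 else 0).
Definition e2_pm : 'rV[CC]_3 := \row_j (if j == 2 :> nat then 1 else 0).

Definition co (u : 'rV[CC]_3) (k : nat) : CC := u 0 (inord k).

(* [u,v] with [l,p_+] = p_+, [l,p_-] = -p_-, [p_+,p_-] = 0 (antisymmetric) *)
Definition e2_br (u v : 'rV[CC]_3) : 'rV[CC]_3 :=
  (co u 0 * co v 1 - co u 1 * co v 0) *: e2_pp
  - (co u 0 * co v 2 - co u 2 * co v 0) *: e2_pm.

(* The 3-dimensional right e(2)-module with basis X1, X2, X3
   (coordinates 0, 1, 2 in 'rV[CC]_3):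
   (X1,p_-) = -X3, (X2,p_+) = X3, (X1,l) = -X1, (X2,l) = X2, others 0. *)
Definition mod_act (v u : 'rV[CC]_3) : 'rV[CC]_3 :=
  (- (co v 0 * co u 0)) *: e2_l + (co v 1 * co u 0) *: e2_pp
  + (co v 1 * co u 1 - co v 0 * co u 2) *: e2_pm.

(* multiplication table of K_2(a1,a2) in the ordered basis
   b 0 = l, b 1 = p_+, b 2 = p_-, b 3 = X1, b 4 = X2, b 5 = X3 *)
Definition K2_table (L : lmodType CC) (a1 a2 : CC) (b : 'I_6 -> L)
  (i j : 'I_6) : L :=
  match nat_of_ord i, nat_of_ord j with
  | 0, 1 => b (inord 1)
  | 1, 0 => - b (inord 1)
  | 0, 2 => - b (inord 2)
  | 2, 0 => b (inord 2)
  | 0, 0 => a1 *: b (inord 5)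
  | 1, 2 => a2 *: b (inord 5)
  | 2, 1 => - (a2 *: b (inord 5))
  | 3, 2 => - b (inord 5)
  | 3, 0 => - b (inord 3)
  | 4, 1 => b (inord 5)
  | 4, 0 => b (inord 4)
  | _, _ => 0
  end.

(* Main.v *)
Require Import Defs.
From mathcomp Require Import all_boot all_algebra all_field.
From mathcomp Require Import complex ring.
From mathcomp Require Import reals Rstruct.
Local Open Scope ring_scope.
Import GRing.Theory Num.Theory.

Definition vec (a b c : CC) : 'rV[CC]_3 := a *: e2_l + b *: e2_pp + c *: e2_pm.

Lemma co_l0 : co e2_l 0 = 1. Proof. by rewrite /co mxE inordK. Qed.
Lemma co_l1 : co e2_l 1 = 0. Proof. by rewrite /co mxE inordK. Qed.
Lemma co_l2 : co e2_l 2 = 0. Proof. by rewrite /co mxE inordK. Qed.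
Lemma co_p0 : co e2_pp 0 = 0. Proof. by rewrite /co mxE inordK. Qed.
Lemma co_p1 : co e2_pp 1 = 1. Proof. by rewrite /co mxE inordK. Qed.
Lemma co_p2 : co e2_pp 2 = 0. Proof. by rewrite /co mxE inordK. Qed.
Lemma co_m0 : co e2_pm 0 = 0. Proof. by rewrite /co mxE inordK. Qed.
Lemma co_m1 : co e2_pm 1 = 0. Proof. by rewrite /co mxE inordK. Qed.
Lemma co_m2 : co e2_pm 2 = 1. Proof. by rewrite /co mxE inordK. Qed.
Lemma coD u v k : co (u + v) k = co u k + co v k. Proof. by rewrite /co mxE. Qed.
Lemma coZ a u k : co (a *: u) k = a * co u k. Proof. by rewrite /co mxE. Qed.
Lemma coN u k : co (- u) k = - co u k. Proof. by rewrite /co mxE. Qed.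
Lemma coB u v k : co (u - v) k = co u k - co v k. Proof. by rewrite /co !mxE. Qed.
Lemma co0 k : co 0 k = 0. Proof. by rewrite /co mxE. Qed.
Definition coE := (coD, coZ, coN, co_l0, co_l1, co_l2, co_p0, co_p1, co_p2, co_m0, co_m1, co_m2).

Lemma row3_eq (u v : 'rV[CC]_3) : co u 0 = co v 0 -> co u 1 = co v 1 -> co u 2 = co v 2 -> u = v.
Proof.
move=> h0 h1 h2; apply/rowP => j.
case: j => [[|[|[|//]]] Hj].
- by move: h0; rewrite /co (_ : inord 0 = Ordinal Hj) //; apply/val_inj; rewrite /= inordK.
- by move: h1; rewrite /co (_ : inord 1 = Ordinal Hj) //; apply/val_inj; rewrite /= inordK.
- by move: h2; rewrite /co (_ : inord 2 = Ordinal Hj) //; apply/val_inj; rewrite /= inordK.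
Qed.

Lemma mod_actE v u : mod_act v u = vec (- (co v 0 * co u 0)) (co v 1 * co u 0) (co v 1 * co u 1 - co v 0 * co u 2).
Proof. by []. Qed.
Lemma e2_brE u v : e2_br u v = vec 0 (co u 0 * co v 1 - co u 1 * co v 0) (- (co u 0 * co v 2 - co u 2 * co v 0)).
Proof. by rewrite /e2_br /vec scale0r add0r scaleNr. Qed.

Ltac vsolve0 := apply: row3_eq; rewrite /vec ?mod_actE ?e2_brE /vec !coE ?co0; ring.

Lemma coV0 a b c : co (vec a b c) 0 = a. Proof. by rewrite /vec !coE; ring. Qed.
Lemma coV1 a b c : co (vec a b c) 1 = b. Proof. by rewrite /vec !coE; ring. Qed.
Lemma coV2 a b c : co (vec a b c) 2 = c. Proof. by rewrite /vec !coE; ring. Qed.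
Lemma mod_act_l v : mod_act v e2_l = vec (- co v 0) (co v 1) 0. Proof. vsolve0. Qed.
Lemma mod_act_pp v : mod_act v e2_pp = co v 1 *: e2_pm. Proof. vsolve0. Qed.
Lemma mod_act_pm v : mod_act v e2_pm = - (co v 0 *: e2_pm). Proof. vsolve0. Qed.
Lemma mod_act0 v : mod_act v 0 = 0. Proof. vsolve0. Qed.
Lemma br_ll : e2_br e2_l e2_l = 0. Proof. vsolve0. Qed.
Lemma br_lp : e2_br e2_l e2_pp = e2_pp. Proof. vsolve0. Qed.
Lemma br_lm : e2_br e2_l e2_pm = - e2_pm. Proof. vsolve0. Qed.
Lemma br_pl : e2_br e2_pp e2_l = - e2_pp. Proof. vsolve0. Qed.
Lemma br_ml : e2_br e2_pm e2_l = e2_pm. Proof. vsolve0. Qed.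
Lemma br_pp : e2_br e2_pp e2_pp = 0. Proof. vsolve0. Qed.
Lemma br_mm : e2_br e2_pm e2_pm = 0. Proof. vsolve0. Qed.
Lemma br_pm : e2_br e2_pp e2_pm = 0. Proof. vsolve0. Qed.
Lemma br_mp : e2_br e2_pm e2_pp = 0. Proof. vsolve0. Qed.
Definition brE := (br_ll, br_lp, br_lm, br_pl, br_ml, br_pp, br_mm, br_pm, br_mp).
Definition maE := (mod_act_l, mod_act_pp, mod_act_pm, mod_act0).
Ltac vsolve := rewrite ?brE ?maE ?coV0 ?coV1 ?coV2; apply: row3_eq; rewrite /vec ?coE ?co0; ring.


Section Br.
Variable L : vectType CC.
Variable br : L -> L -> L.
Hypothesis HL : is_leibniz_algebra br.

Lemma brDl x y z : br (x + y) z = br x z + br y z.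
Proof. have [[h1 _] _] := HL; by have := h1 1 x y z; rewrite !scale1r. Qed.
Lemma brDr x y z : br z (x + y) = br z x + br z y.
Proof. have [[_ h2] _] := HL; by have := h2 1 z x y; rewrite !scale1r. Qed.
Lemma br0l z : br 0 z = 0.
Proof. have [[h1 _] _] := HL. have := h1 (-1) z z z. by rewrite !scaleN1r !addNr. Qed.
Lemma br0r z : br z 0 = 0.
Proof. have [[_ h2] _] := HL. have := h2 (-1) z z z. by rewrite !scaleN1r !addNr. Qed.
Lemma brZl a x z : br (a *: x) z = a *: br x z.
Proof. have [[h1 _] _] := HL; by have := h1 a x 0 z; rewrite addr0 br0l addr0. Qed.
Lemma brZr a x z : br z (a *: x) = a *: br z x.
Proof. have [[_ h2] _] := HL; by have := h2 a z x 0; rewrite addr0 br0r addr0. Qed.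
Lemma brNl x z : br (- x) z = - br x z.
Proof. by rewrite -scaleN1r brZl scaleN1r. Qed.
Lemma brNr x z : br z (- x) = - br z x.
Proof. by rewrite -scaleN1r brZr scaleN1r. Qed.
Lemma brBl x y z : br (x - y) z = br x z - br y z.
Proof. by rewrite brDl brNl. Qed.
Lemma brBr x y z : br z (x - y) = br z x - br z y.
Proof. by rewrite brDr brNr. Qed.

Lemma sq_right z : squares_ideal br z -> forall x, br x z = 0.
Proof.
have [_ HR] := HL.
move=> Hz; apply: (Hz (fun z => forall x, br x z = 0)); last by move=> x w; apply: (addrI (br (br w x) x)); rewrite -HR addr0.
split.
- by move=> x; rewrite br0r.
- by move=> a x y hx hy w; rewrite brDr brZr hx hy scaler0 addr0.
- by move=> x y hx w; have := HR w x y; rewrite !hx br0l add0r.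
- by move=> x y hx w; rewrite hx br0r.
Qed.
End Br.

Lemma CCnat n : (n.+1)%:R != 0 :> CC.
Proof. by have := @pnatr_eq0 (Rdefinitions.R)[i] n.+1; rewrite /= => ->. Qed.

Lemma tnth_inord (L : vectType CC) (b : 6.-tuple L) k : (k < 6)%N -> tnth b (inord k) = nth 0 b k.
Proof. by move=> hk; rewrite (tnth_nth 0) inordK. Qed.

Lemma lin0 (A B x : CC) n : (B - A = n.+1%:R * x) -> A = B -> x = 0.
Proof.
move=> h e; move: h; rewrite e subrr => /esym/eqP.
by rewrite mulf_eq0 (negbTE (CCnat n)) /= => /eqP.
Qed.

Theorem mainTheorem4 (L : vectType CC) (br : L -> L -> L) :
  is_leibniz_algebra br ->
  (exists (pi : {linear L -> 'rV[CC]_3}) (phi : {linear 'rV[CC]_3 -> L}),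
      (forall u, exists x, pi x = u) /\
          (forall x, pi x = 0 <-> squares_ideal br x) /\
          (forall x y, pi (br x y) = e2_br (pi x) (pi y)) /\
          injective phi /\
          (forall x, squares_ideal br x <-> exists v, phi v = x) /\
          (forall v y, br (phi v) y = phi (mod_act v (pi y)))) ->
  exists (a1 a2 : CC) (b : 6.-tuple L),
    basis_of fullv b /\
    squares_ideal br (tnth b (inord 3)) /\
    squares_ideal br (tnth b (inord 4)) /\
    squares_ideal br (tnth b (inord 5)) /\
    forall i j : 'I_6, br (tnth b i) (tnth b j) = K2_table a1 a2 (tnth b) i j.
Proof.
move=> HL [pi [phi [Hsurj [Hker [Hpi [Hinj [Himg Hact]]]]]]].
have HR := HL.2.
have brDl := @brDl _ _ HL. have brDr := @brDr _ _ HL. have brNl := @brNl _ _ HL. have brNr := @brNr _ _ HL.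
have brZl := @brZl _ _ HL. have brZr := @brZr _ _ HL. have br0l := @br0l _ _ HL. have br0r := @br0r _ _ HL.
have piphi v : pi (phi v) = 0 by apply/Hker/Himg; exists v.
have brI y v : br y (phi v) = 0.
  have hI : squares_ideal br (phi v) by apply/Himg; exists v.
  exact: sq_right HL _ hI y.
have inI x : pi x = 0 -> exists v, phi v = x by move/Hker/Himg.
have [l0 Hl0] := Hsurj e2_l.
have [pp0 Hpp0] := Hsurj e2_pp.
have [pm0 Hpm0] := Hsurj e2_pm.
have [vLL HLL] : exists v, phi v = br l0 l0 by apply: inI; rewrite Hpi Hl0; vsolve.
have [vLP HLP] : exists v, phi v = br l0 pp0 - pp0 by apply: inI; rewrite linearB /= Hpi Hl0 Hpp0; vsolve.
have [vLM HLM] : exists v, phi v = br l0 pm0 + pm0 by apply: inI; rewrite linearD /= Hpi Hl0 Hpm0; vsolve.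
pose av := vec (co vLL 0) (- co vLL 1) 0.
pose bv := vLP - co vLL 1 *: e2_pm.
pose cv := - vLM + co vLL 0 *: e2_pm.
pose l := l0 + phi av. pose pp := pp0 + phi bv. pose pm := pm0 + phi cv.
have Hl : pi l = e2_l by rewrite linearD /= piphi addr0.
have Hpp : pi pp = e2_pp by rewrite linearD /= piphi addr0.
have Hpm : pi pm = e2_pm by rewrite linearD /= piphi addr0.
have Hll : br l l = phi (co vLL 2 *: e2_pm).
  rewrite /l brDl !brDr !brI !addr0 Hact Hl0 -HLL -linearD.
  by congr (phi _); rewrite /av; vsolve.
have Hlp : br l pp = pp.
  rewrite /l /pp brDl !brDr !brI !addr0 Hact Hpp0.
  have -> : br l0 pp0 = phi vLP + pp0 by rewrite HLP subrK.
  by rewrite addrAC -linearD addrC; congr (_ + phi _); rewrite /av /bv; vsolve.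
have Hlm : br l pm = - pm.
  rewrite /l /pm brDl !brDr !brI !addr0 Hact Hpm0.
  have -> : br l0 pm0 = phi vLM - pm0 by rewrite HLM addrK.
  rewrite opprD addrAC -linearD -linearN addrC; congr (_ + phi _).
  by rewrite /av /cv; vsolve.
clearbody l pp pm.
have Hpl : br pp l = - pp.
  have := HR l l pp; rewrite Hll Hact Hpp !Hlp.
  rewrite (_ : mod_act _ e2_pp = 0); last by vsolve.
  by rewrite linear0 => /eqP; rewrite eq_sym addr_eq0 => /eqP.
have Hml : br pm l = pm.
  have := HR l l pm; rewrite Hll Hact Hpm !Hlm brNl brNr Hlm opprK.
  rewrite (_ : mod_act _ e2_pm = 0); last by vsolve.
  by rewrite linear0 => /eqP; rewrite eq_sym addrC subr_eq0 => /eqP/esym.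
have Hpp2 : br pp pp = 0.
  have [w Hw] : exists w, phi w = br pp pp by apply: inI; rewrite Hpi Hpp; vsolve.
  have := HR pp l pp; rewrite Hpl Hlp brNl -Hw Hact Hl -linearN -linearD => /Hinj E.
  have e0 := congr1 (co^~0) E; have e1 := congr1 (co^~1) E; have e2 := congr1 (co^~2) E.
  move: e0 e1 e2; rewrite /= ?maE !coE ?coV0 ?coV1 ?coV2 ?co0 => e0 e1 e2.
  rewrite (_ : w = 0) ?linear0 //; apply: row3_eq; rewrite co0.
  - by apply: (@lin0 _ _ _ 0 _ e0); ring.
  - by apply: (@lin0 _ _ _ 2 _ e1); ring.
  - by apply: (@lin0 _ _ _ 1 _ e2); ring.
have Hmm2 : br pm pm = 0.
  have [w Hw] : exists w, phi w = br pm pm by apply: inI; rewrite Hpi Hpm; vsolve.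
  have := HR pm l pm; rewrite Hml Hlm brNr -Hw Hact Hl -linearN -linearD => /Hinj E.
  have e0 := congr1 (co^~0) E; have e1 := congr1 (co^~1) E; have e2 := congr1 (co^~2) E.
  move: e0 e1 e2; rewrite /= ?maE !coE ?coV0 ?coV1 ?coV2 ?co0 => e0 e1 e2.
  rewrite (_ : w = 0) ?linear0 //; apply: row3_eq; rewrite co0.
  - by apply: (@lin0 _ _ _ 2 _ (esym e0)); ring.
  - by apply: (@lin0 _ _ _ 0 _ (esym e1)); ring.
  - by apply: (@lin0 _ _ _ 1 _ (esym e2)); ring.
have [w Hw] : exists w, phi w = br pp pm by apply: inI; rewrite Hpi Hpp Hpm; vsolve.
have Hpm2 : br pp pm = co w 2 *: phi e2_pm.
  have := HR pp l pm; rewrite Hpl Hlm brNl brNr -Hw Hact Hl -linearN -linearD => /Hinj E.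
  have e0 := congr1 (co^~0) E; have e1 := congr1 (co^~1) E.
  move: e0 e1; rewrite /= ?maE !coE ?coV0 ?coV1 ?coV2 ?co0 => e0 e1.
  have w0 : co w 0 = 0 by apply: (@lin0 _ _ _ 0 _ (esym e0)); ring.
  have w1 : co w 1 = 0 by apply: (@lin0 _ _ _ 0 _ e1); ring.
  rewrite -linearZ; congr (phi _); apply: row3_eq; rewrite !coE ?w0 ?w1; ring.
have Hmp2 : br pm pp = - (co w 2 *: phi e2_pm).
  have := HR l pp pm; rewrite Hlp Hlm brNl -Hw brI addr0 => E.
  by rewrite -Hpm2 -Hw E opprK.

exists (co vLL 2), (co w 2), [tuple l; pp; pm; phi e2_l; phi e2_pp; phi e2_pm].
split; [|split; [|split; [|split]]].
- rewrite /basis_of; apply/andP; split.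
  + rewrite eqEsubv subvf /=; apply/subvP => x _.
    have [v Hv] : exists v, phi v = x - (co (pi x) 0 *: l + co (pi x) 1 *: pp + co (pi x) 2 *: pm).
      apply: inI; rewrite linearB !linearD !linearZ /= Hl Hpp Hpm.
      vsolve.
    have -> : x = phi v + (co (pi x) 0 *: l + co (pi x) 1 *: pp + co (pi x) 2 *: pm) by rewrite Hv subrK.
    have -> : phi v = co v 0 *: phi e2_l + co v 1 *: phi e2_pp + co v 2 *: phi e2_pm.
      by rewrite -!linearZ -!linearD; congr (phi _); vsolve.
    by repeat apply: memvD; apply: memvZ; apply: memv_span; rewrite !inE eqxx ?orbT.
  + apply/freeP => k; rewrite !big_ord_recl big_ord0 /= addr0 => Hk.
    set k0 := k ord0 in Hk. set k1 := k (lift ord0 ord0) in Hk.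
    set k2 := k (lift ord0 (lift ord0 ord0)) in Hk.
    set k3 := k (lift ord0 (lift ord0 (lift ord0 ord0))) in Hk.
    set k4 := k (lift ord0 (lift ord0 (lift ord0 (lift ord0 ord0)))) in Hk.
    set k5 := k (lift ord0 (lift ord0 (lift ord0 (lift ord0 (lift ord0 ord0))))) in Hk.
    have Hp := congr1 pi Hk.
    rewrite linear0 !linearD !linearZ /= Hl Hpp Hpm !piphi in Hp.
    have e0 := congr1 (co^~0) Hp; have e1 := congr1 (co^~1) Hp; have e2 := congr1 (co^~2) Hp.
    rewrite /= !coE ?co0 in e0 e1 e2.
    have h0 : k0 = 0 by rewrite -e0; ring.
    have h1 : k1 = 0 by rewrite -e1; ring.
    have h2 : k2 = 0 by rewrite -e2; ring.
    rewrite h0 h1 h2 !scale0r !add0r -!linearZ -!linearD -(linear0 phi) in Hk.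
    have E := Hinj _ _ Hk.
    have f0 := congr1 (co^~0) E; have f1 := congr1 (co^~1) E; have f2 := congr1 (co^~2) E.
    rewrite /= !coE ?co0 in f0 f1 f2.
    have h3 : k3 = 0 by rewrite -f0; ring.
    have h4 : k4 = 0 by rewrite -f1; ring.
    have h5 : k5 = 0 by rewrite -f2; ring.
    move=> [[|[|[|[|[|[|//]]]]]] Hi].
    * by rewrite (_ : Ordinal Hi = ord0) //; apply: val_inj.
    * by rewrite (_ : Ordinal Hi = lift ord0 ord0) //; apply: val_inj.
    * by rewrite (_ : Ordinal Hi = lift ord0 (lift ord0 ord0)) //; apply: val_inj.
    * by rewrite (_ : Ordinal Hi = lift ord0 (lift ord0 (lift ord0 ord0))) //; apply: val_inj.
    * by rewrite (_ : Ordinal Hi = lift ord0 (lift ord0 (lift ord0 (lift ord0 ord0)))) //; apply: val_inj.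
    * by rewrite (_ : Ordinal Hi = lift ord0 (lift ord0 (lift ord0 (lift ord0 (lift ord0 ord0))))) //; apply: val_inj.
- by rewrite tnth_inord //=; apply/Himg; exists e2_l.
- by rewrite tnth_inord //=; apply/Himg; exists e2_pp.
- by rewrite tnth_inord //=; apply/Himg; exists e2_pm.
move=> [[|[|[|[|[|[|//]]]]]] Hi] [[|[|[|[|[|[|//]]]]]] Hj]; rewrite /K2_table !(tnth_nth 0) /= ?inordK //=.
all: try (by rewrite ?Hll ?Hlp ?Hlm ?Hpl ?Hml ?Hpp2 ?Hmm2 ?Hpm2 ?Hmp2 ?brI ?linearZ).
all: rewrite Hact ?Hl ?Hpp ?Hpm ?piphi ?maE -?linearN -?(linear0 phi); congr (phi _); vsolve.
Qed.
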